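(* Suppose $1/n\ll\varepsilon\ll\varepsilon_1\ll\eta_1\ll\tau\ll1$. Let $G$ be a digraph on $n$ vertices with $\delta^0(G)\geq n/2$ and let $A,B,S,T$ be a partition of $V(G)$ satisfying the $ABST$-conditions. Let $L_1,L_2$ be oriented paths of length eight, and for each $i\in\{1,2\}$ let $(X_i,Y_i)\in\{(A,B),(B,A)\}$ be prescribed. Then $G$ contains vertex-disjoint copies $L_1^G,L_2^G$ of $L_1,L_2$ such that each $L_i^G$ is a useful path and is an $X_iY_i$-path.
   Context: Digraphs have no loops and at most one edge in each direction between two vertices; $\delta^0$ is the minimum semidegree; $d^+_X(x)=|N^+(x)\cap X|$, $d^-_X(x)=|N^-(x)\cap X|$, $d^\pm_X(x)\geq c$ means both $\geq c$; $G[A,B]$ is the digraph on $A\cup B$ with edges of $G$ between $A$ and $B$ in either direction. The $ABST$-conditions on a partition $A,B,S,T$ of sizes $a,b,s,t$: $a\leq b$, $s\leq t$; $a,b,s,t\geq\tau n$; $|a-b|,|s-t|\leq\varepsilon_1 n$; $\delta^0(G[A,B])\geq\eta_1 n$; $d^+_{B\cup S}(x),d^-_{A\cup S}(x)\geq\eta_1 n$ for all $x\in S$; $d^+_{A\cup T}(x),d^-_{B\cup T}(x)\geq\eta_1n$ for all $x\in T$; $d^\pm_B(x)\geq b-\varepsilon^{1/3}n$ for all but at most $\varepsilon_1n$ vertices $x\in A$; $d^\pm_A(x)\geq a-\varepsilon^{1/3}n$ for all but at most $\varepsilon_1 n$ vertices $x\in B$; $d^+_{B\cup S}(x)\geq b+s-\varepsilon^{1/3}n$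 and $d^-_{A\cup S}(x)\geq a+s-\varepsilon^{1/3}n$ for all but at most $\varepsilon_1n$ vertices $x\in S$; $d^+_{A\cup T}(x)\geq a+t-\varepsilon^{1/3}n$ and $d^-_{B\cup T}(x)\geq b+t-\varepsilon^{1/3}n$ for all but at most $\varepsilon_1 n$ vertices $x\in T$. A copy of an oriented path is an injective edge- and orientation-preserving map into $G$; it is an $XY$-path if the initial vertex maps into $X$ and the final vertex into $Y$. For a path $x_1\dots x_q$ in $G$, consider the subsequence of its vertices in $A\cup B$; a vertex of this subsequence in $A$ (resp. $B$) whose predecessor in the subsequence is also in $A$ (resp. $B$) is a repeated $A$ (resp. repeated $B$). A path in $G$ is useful if it is an $AB$-path or a $BA$-path, has no repeated $A$s and no repeated $B$s, and contains an odd number of vertices of $S\cup T$. The hierarchy $\alpha\ll\beta$ means $\alpha$ is sufficiently small as a function of $\beta$. *)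

(* Defs.v *)
From mathcomp Require Import all_boot.
From Stdlib Require Import Reals.

Set Implicit Arguments.
Unset Strict Implicit.
Unset Printing Implicit Defensive.

Section Digraphs.
Variable V : finType.
Variable E : rel V.

(* No loops.  "At most one edge in each direction" is automatic for a relation. *)
Definition loopless : Prop := forall x : V, ~~ E x x.

Definition dplus (X : {set V}) (x : V) : nat := #|[set y in X | E x y]|.
Definition dminus (X : {set V}) (x : V) : nat := #|[set y in X | E y x]|.

Definition min_semideg_half (n : nat) : Prop :=
  forall x : V, (n <= 2 * dplus setT x)%N /\ (n <= 2 * dminus setT x)%N.

Definition Rn (k : nat) : R := INR k.

(* delta^0(G[A,B]) >= c, for disjoint A, B: every vertex of A has in/out
   degree >= c into B (the only edges of G[A,B] at x in A go to/from B), and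
   symmetrically for B. *)
Definition bip_min_semideg (A B : {set V}) (c : R) : Prop :=
  (forall x, x \in A -> (c <= Rn (dplus B x))%R /\ (c <= Rn (dminus B x))%R) /\
  (forall x, x \in B -> (c <= Rn (dplus A x))%R /\ (c <= Rn (dminus A x))%R).

Definition all_but_at_most (m : R) (X : {set V}) (P : V -> Prop) : Prop :=
  exists Ex : {set V}, Ex \subset X /\ (Rn #|Ex| <= m)%R /\
    forall x, x \in X -> x \notin Ex -> P x.

Definition is_partition4 (A B S T : {set V}) : Prop :=
  A :|: B :|: S :|: T = setT /\
  [&& [disjoint A & B], [disjoint A & S], [disjoint A & T],
      [disjoint B & S], [disjoint B & T] & [disjoint S & T]].

Definition ABST_conditions (A B S T : {set V}) (n : nat)
    (tau eta1 eps1 eps : R) : Prop :=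
  let a := #|A| in let b := #|B| in let s := #|S| in let t := #|T| in
  let e13 := Rpower eps (1 / 3) in
  [/\ is_partition4 A B S T /\
      (a <= b)%N /\ (s <= t)%N,
      (tau * Rn n <= Rn a)%R /\ (tau * Rn n <= Rn b)%R /\
        (tau * Rn n <= Rn s)%R /\ (tau * Rn n <= Rn t)%R,
      (Rabs (Rn a - Rn b) <= eps1 * Rn n)%R /\
        (Rabs (Rn s - Rn t) <= eps1 * Rn n)%R,
      bip_min_semideg A B (eta1 * Rn n) /\
      (forall x, x \in S -> (eta1 * Rn n <= Rn (dplus (B :|: S) x))%R /\
                            (eta1 * Rn n <= Rn (dminus (A :|: S) x))%R) /\
      (forall x, x \in T -> (eta1 * Rn n <= Rn (dplus (A :|: T) x))%R /\
                            (eta1 * Rn n <= Rn (dminus (B :|: T) x))%R) &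
      [/\ all_but_at_most (eps1 * Rn n) A (fun x =>
            (Rn b - e13 * Rn n <= Rn (dplus B x))%R /\
            (Rn b - e13 * Rn n <= Rn (dminus B x))%R),
          all_but_at_most (eps1 * Rn n) B (fun x =>
            (Rn a - e13 * Rn n <= Rn (dplus A x))%R /\
            (Rn a - e13 * Rn n <= Rn (dminus A x))%R),
          all_but_at_most (eps1 * Rn n) S (fun x =>
            (Rn b + Rn s - e13 * Rn n <= Rn (dplus (B :|: S) x))%R /\
            (Rn a + Rn s - e13 * Rn n <= Rn (dminus (A :|: S) x))%R) &
          all_but_at_most (eps1 * Rn n) T (fun x =>
            (Rn a + Rn t - e13 * Rn n <= Rn (dplus (A :|: T) x))%R /\
            (Rn b + Rn t - e13 * Rn n <= Rn (dminus (B :|: T) x))%R)]].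

(* An oriented path of length k (k edges, k+1 vertices v_0..v_k) is given by
   L : k.-tuple bool; the i-th edge is v_i -> v_(i+1) if tnth L i is true and
   v_(i+1) -> v_i otherwise. *)
Definition is_copy (k : nat) (L : k.-tuple bool) (f : 'I_k.+1 -> V) : Prop :=
  injective f /\
  forall i : 'I_k,
    if tnth L i then E (f (widen_ord (leqnSn k) i)) (f (lift ord0 i))
    else E (f (lift ord0 i)) (f (widen_ord (leqnSn k) i)).

Definition path_seq (k : nat) (f : 'I_k.+1 -> V) : seq V :=
  [seq f i | i <- enum 'I_k.+1].

Definition is_XY_path (k : nat) (f : 'I_k.+1 -> V) (X Y : {set V}) : Prop :=
  f ord0 \in X /\ f ord_max \in Y.

(* No repeated A's and no repeated B's: in the subsequence of vertices lying in
   A :|: B, no two consecutive entries are both in A or both in B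
   ([sorted r s] states r holds for each consecutive pair of s). *)
Definition no_repeats (A B : {set V}) (s : seq V) : Prop :=
  sorted (fun x y => ~~ ((x \in A) && (y \in A)) && ~~ ((x \in B) && (y \in B)))
         [seq x <- s | x \in A :|: B].

Definition is_useful (A B S T : {set V}) (k : nat) (f : 'I_k.+1 -> V) : Prop :=
  (is_XY_path f A B \/ is_XY_path f B A) /\
  no_repeats A B (path_seq f) /\
  odd (count (fun x => x \in S :|: T) (path_seq f)).

End Digraphs.

Definition pickXY (V : finType) (ab : bool) (A B : {set V}) : {set V} * {set V} :=
  if ab then (A, B) else (B, A).

(* Main.v *)
Require Import Defs.
From mathcomp Require Import all_boot.
From Stdlib Require Import Reals Lia Lra.
From mathcomp Require Import zify.

Set Implicit Arguments.
Unset Strict Implicit.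
Unset Printing Implicit Defensive.

Section Gen.
Variable V : finType.
Variable E : rel V.

Fixpoint pathrel (bs : seq bool) (s : seq V) : bool :=
  match bs, s with
  | b :: bs', x :: s' =>
      match s' with
      | y :: _ => (if b then E x y else E y x) && pathrel bs' s'
      | [::] => false
      end
  | [::], [:: _] => true
  | _, _ => false
  end.

Lemma pathrel_size bs s : pathrel bs s -> size s = (size bs).+1.
Proof.
elim: bs s => [|b bs IH] [|x [|y s]] //= /andP[_ h].
by move: (IH _ h) => /= ->.
Qed.

Lemma pathrel_cat b1 b2 s1 x s2 :
  pathrel b1 (rcons s1 x) -> pathrel b2 (x :: s2) ->
  pathrel (b1 ++ b2) (s1 ++ x :: s2).
Proof.
elim: s1 b1 => [|y s1 IH] [|b b1] //=.
- by case: s1 IH.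
- move: IH; case: s1 => [|z s1] IH /andP[e h] h2 /=.
    by rewrite e /=; move: (IH b1 h h2).
  by rewrite e /=; move: (IH b1 h h2).
Qed.

Lemma pathrel_rev bs s : pathrel bs s -> pathrel (rev (map negb bs)) (rev s).
Proof.
elim: bs s => [|b bs IH] [|x [|y s]] //= /andP[e h].
have h1 := IH _ h.
rewrite rev_cons -cats1.
rewrite [rev (x :: _)]rev_cons -cats1.
rewrite [rev (y :: s)]rev_cons in h1 *.
rewrite -cats1 -catA /=.
apply: pathrel_cat => //=.
by case: b e => /= ->.
Qed.

Lemma pathrel_nth bs s x0 i : pathrel bs s -> i < size bs ->
  if nth false bs i then E (nth x0 s i) (nth x0 s i.+1)
  else E (nth x0 s i.+1) (nth x0 s i).
Proof.
elim: bs s i => [|b bs IH] [|x [|y s]] i //= /andP[e h].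
case: i => [|i] //= hi.
by have := IH _ i h hi.
Qed.

End Gen.

Section Lab.
Variable V : finType.
Variable E : rel V.
Variables A B S T : {set V}.
Hypothesis hP : is_partition4 A B S T.

Lemma copy_of_seq (L : 8.-tuple bool) (s : seq V) x0 :
  uniq s -> pathrel E L s -> is_copy E L (fun i : 'I_9 => nth x0 s i).
Proof.
move=> us pr; have sz := pathrel_size pr; rewrite size_tuple in sz.
split.
  move=> i j /eqP; rewrite nth_uniq ?sz //.
  by move/eqP/ord_inj.
move=> i; rewrite (tnth_nth false) /=.
have -> : bump 0 i = i.+1 by rewrite /bump leq0n add1n.
by apply: pathrel_nth; rewrite // size_tuple.
Qed.

Definition lab (v : V) : nat :=
  if v \in A then 0 else if v \in B then 1 else if v \in S then 2 else 3.

Lemma part_facts :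
  (forall v, v \in A -> v \notin B) /\ (forall v, v \in A -> v \notin S) /\
  (forall v, v \in A -> v \notin T) /\ (forall v, v \in B -> v \notin S) /\
  (forall v, v \in B -> v \notin T) /\ (forall v, v \in S -> v \notin T).
Proof.
case: hP => _ /and5P[d1 d2 d3 d4 /andP[d5 d6]].
split; last split; last split; last split; last split; move=> v hv; [exact: (negbT (disjointFr d1 hv)) | exact: (negbT (disjointFr d2 hv))
  | exact: (negbT (disjointFr d3 hv)) | exact: (negbT (disjointFr d4 hv))
  | exact: (negbT (disjointFr d5 hv)) | exact: (negbT (disjointFr d6 hv))].
Qed.

Lemma part_cover v : [|| v \in A, v \in B, v \in S | v \in T].
Proof.
case: hP => hc _.
have : v \in A :|: B :|: S :|: T by rewrite hc inE.
by rewrite !inE -!orbA.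
Qed.

Lemma labA v : (v \in A) = (lab v == 0).
Proof. by rewrite /lab; case: (v \in A) => //; case: (v \in B) => //; case: (v \in S). Qed.

Lemma labB v : (v \in B) = (lab v == 1).
Proof.
case: part_facts => h1 _.
rewrite /lab; case hA: (v \in A).
  by rewrite (negbTE (h1 _ hA)).
by case: (v \in B) => //; case: (v \in S).
Qed.

Lemma labST v : (v \in S :|: T) = (2 <= lab v).
Proof.
case: part_facts => h1 [h2 [h3 [h4 [h5 h6]]]]; have hc := part_cover v.
rewrite /lab inE; case hA: (v \in A).
  by rewrite (negbTE (h2 _ hA)) (negbTE (h3 _ hA)).
case hB: (v \in B).
  by rewrite (negbTE (h4 _ hB)) (negbTE (h5 _ hB)).
rewrite hA hB /= in hc.
by case: (v \in S) hc => //= ->.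
Qed.

Lemma labS v : (v \in S) = (lab v == 2).
Proof.
case: part_facts => h1 [h2 [h3 [h4 [h5 h6]]]].
rewrite /lab; case hA: (v \in A); first by rewrite (negbTE (h2 _ hA)).
case hB: (v \in B); first by rewrite (negbTE (h4 _ hB)).
by case: (v \in S).
Qed.

Lemma labT v : (v \in T) = (lab v == 3).
Proof.
case: part_facts => h1 [h2 [h3 [h4 [h5 h6]]]]; have hc := part_cover v.
rewrite /lab; case hA: (v \in A); first by rewrite (negbTE (h3 _ hA)).
case hB: (v \in B); first by rewrite (negbTE (h5 _ hB)).
case hS: (v \in S); first by rewrite (negbTE (h6 _ hS)).
by rewrite hA hB hS /= in hc; rewrite hc.
Qed.

Lemma labAB v : (v \in A :|: B) = (lab v < 2).
Proof. by rewrite inE labA labB; case: (lab v) => [|[|[|]]]. Qed.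

Definition Rlab (i j : nat) : bool :=
  ~~ ((i == 0) && (j == 0)) && ~~ ((i == 1) && (j == 1)).

Definition chk (ab : bool) (w : seq nat) : bool :=
  [&& nth 4 w 0 == (if ab then 0 else 1), nth 4 w 8 == (if ab then 1 else 0),
      sorted Rlab [seq i <- w | i < 2] & odd (count (fun i => 2 <= i) w)].

Lemma useful_of_chk (s : seq V) x0 ab : size s = 9 -> chk ab (map lab s) ->
  is_useful A B S T (fun i : 'I_9 => nth x0 s i) /\
  is_XY_path (fun i : 'I_9 => nth x0 s i) (if ab then A else B) (if ab then B else A).
Proof.
move=> sz /and4P[h0 h8 hs hc].
have ps : path_seq (fun i : 'I_9 => nth x0 s i) = s.
  rewrite /path_seq -[RHS](mkseq_nth x0) sz /mkseq -val_enum_ord -map_comp.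
  by [].
rewrite (nth_map x0) ?sz // in h0; rewrite (nth_map x0) ?sz // in h8.
have XY : is_XY_path (fun i : 'I_9 => nth x0 s i) (if ab then A else B) (if ab then B else A).
  rewrite /is_XY_path /=.
  by move: h0 h8; case: ab => /eqP h0 /eqP h8; rewrite ?labA ?labB h0 h8.
split=> //; split; first by clear h0 h8; move: XY; case: ab => XY; [left|right].
rewrite /no_repeats ps; split.
  have -> : [seq x <- s | x \in A :|: B] = [seq x <- s | lab x < 2].
    by apply: eq_filter => v; rewrite labAB.
  move: hs; rewrite filter_map sorted_map.
  apply: sub_sorted => u v /=; rewrite /Rlab labA labB labA labB.
  by [].
rewrite count_map in hc.
by rewrite (eq_count (a2 := preim lab (fun i => 2 <= i))) // => v; rewrite /= labST.
Qed.

End Lab.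

Lemma card_setU_le (V : finType) (X Y : {set V}) : #|X :|: Y| <= #|X| + #|Y|.
Proof. exact: (leq_card_setU X Y).1. Qed.

Lemma pick_out (V : finType) (P W : {set V}) : #|W| < #|P| -> exists y, y \in P /\ y \notin W.
Proof.
move=> h; case: (boolP (P \subset W)) => [sub|].
  by move: (subset_leq_card sub); rewrite leqNgt h.
by case/subsetPn=> y hy hn; exists y.
Qed.

Lemma card_seqset (V : finType) (s : seq V) : #|[set x in s]| <= size s.
Proof.
have -> : #|[set x in s]| = #|s| by apply: eq_card => x; rewrite inE.
exact: card_size.
Qed.

Lemma uniq_cat_all (V : finType) (s1 s2 : seq V) :
  uniq s1 -> uniq s2 -> all (fun x => x \notin s1) s2 -> uniq (s1 ++ s2).
Proof.
move=> u1 u2 h; rewrite cat_uniq u1 u2 andbT -all_predC.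
by apply: sub_all h => x.
Qed.

Fixpoint altw (c : bool) (m : nat) : seq nat :=
  if m is m'.+1 then (if c then 0 else 1) :: altw (~~ c) m' else [::].

Lemma arA a b c d e f M : a <= b + c -> b + d + c + e + f < M -> a + d + f < M.
Proof. lia. Qed.
Lemma arB a b c d e f M : a <= b + c + d -> b + d + c + e + f < M -> a + e + f < M.
Proof. lia. Qed.

Section Ext.
Variable V : finType.
Variable E : rel V.
Variables A B S T ExA ExB : {set V}.
Variables k M : nat.
Hypothesis hP : is_partition4 A B S T.
Definition sd (c : bool) := if c then A else B.
Definition ex (c : bool) := if c then ExA else ExB.
Hypothesis tAB : forall c v, v \in sd c -> v \notin ex c ->
  #|[set y in sd (~~c) | ~~ E v y]| <= k /\ #|[set y in sd (~~c) | ~~ E y v]| <= k.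
Hypothesis exAB : forall c, #|ex c| <= k.
Hypothesis szAB : forall c, M <= #|sd c|.

Lemma lab_sd c v : v \in sd c -> lab A B S v = if c then 0 else 1.
Proof.
by case: c => /= h; apply/eqP; [rewrite -labA | rewrite -(labB hP)].
Qed.

Lemma ext bs : forall c v (W : {set V}), v \in sd c -> v \notin ex c -> v \in W ->
  #|W| + size bs + 2 * k < M ->
  exists q, [/\ size q = size bs, pathrel E bs (v :: q), uniq q,
     all (fun x => x \notin W) q & map (lab A B S) q = altw (~~ c) (size bs)].
Proof.
elim: bs => [|b bs IH] c v W hv hx hW hsz.
  by exists [::].
pose Z := [set y in sd (~~c) | ~~ (if b then E v y else E y v)] :|: ex (~~c) :|: W.
have hZ : #|Z| < #|sd (~~c)|.
  have h1 : #|[set y in sd (~~c) | ~~ (if b then E v y else E y v)]| <= k.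
    by case: (tAB hv hx); clear Z hsz IH; case: b.
  have := card_setU_le [set y in sd (~~c) | ~~ (if b then E v y else E y v)] (ex (~~c)).
  have := card_setU_le ([set y in sd (~~c) | ~~ (if b then E v y else E y v)] :|: ex (~~c)) W.
  have := exAB (~~c); have := szAB (~~c); rewrite /= in hsz; rewrite -/Z.
  lia.
case: (pick_out hZ) => y [hy hyZ].
have hyW : y \notin W by move: hyZ; rewrite !inE negb_or => /andP[_ ->].
have hyx : y \notin ex (~~c) by move: hyZ; rewrite !inE !negb_or => /andP[/andP[_ ->]].
have hye : if b then E v y else E y v.
  by move: hyZ; rewrite !inE hy /= !negb_or negbK => /andP[/andP[-> _]].
have hyv : y \in sd (~~ c) by [].
have := IH (~~c) y (y |: W) hyv hyx (setU11 _ _).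
case.
  rewrite cardsU1 hyW /=; move: hsz => /=.
  rewrite add1n; lia.
move=> q [h1 h2 h3 h4 h5].
exists (y :: q); split => //=.
- by rewrite h1.
- by rewrite hye.
- rewrite h3 andbT; apply/negP => yq.
  by move/allP: h4 => /(_ y yq); rewrite setU11.
- rewrite hyW /=; apply: sub_all h4 => x; rewrite !inE negb_or; case/andP.
  by [].
- by rewrite (lab_sd hyv) h5 negbK.
Qed.

Lemma assemble (bl br cb : seq bool) (cf : V) (c1 : seq V) cL cR (W : {set V}) :
  cf \in sd cL -> cf \notin ex cL -> last cf c1 \in sd cR -> last cf c1 \notin ex cR ->
  pathrel E cb (cf :: c1) -> uniq (cf :: c1) -> all (fun x => x \notin W) (cf :: c1) ->
  #|W| + size bl + size (cf :: c1) + size br + 2 * k < M ->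
  exists s, [/\ pathrel E (bl ++ cb ++ br) s, uniq s, all (fun x => x \notin W) s &
     map (lab A B S) s = rev (altw (~~ cL) (size bl)) ++ map (lab A B S) (cf :: c1)
        ++ altw (~~ cR) (size br)].
Proof.
set c := cf :: c1 => h1 h2 h3 h4 pc uc ac hsz.
pose W1 := W :|: [set x in c].
have hW1 : #|W1| <= #|W| + size c.
  by apply: leq_trans (card_setU_le _ _) _; rewrite leq_add2l; exact: card_seqset.
have cfW1 : cf \in W1 by rewrite !inE eqxx orbT.
have := @ext (rev (map negb bl)) cL cf W1 h1 h2 cfW1.
case. rewrite size_rev size_map; move: hW1 hsz; apply: arA.
move=> qL [q1 q2 q3 q4 q5].
pose W2 := W1 :|: [set x in qL].
have hW2 : #|W2| <= #|W| + size c + size bl.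
  apply: leq_trans (card_setU_le _ _) _.
  have := card_seqset qL; rewrite q1 size_rev size_map; exact: leq_add.
have clW2 : last cf c1 \in W2.
  by apply/setUP; left; apply/setUP; right; rewrite inE; exact: mem_last.
have := @ext br cR (last cf c1) W2 h3 h4 clW2.
case. move: hW2 hsz; apply: arB.
move=> qR [r1 r2 r3 r4 r5].
exists (rev qL ++ c ++ qR); split.
- have pl := pathrel_rev q2.
  rewrite map_rev revK -map_comp (map_id_in (f := negb \o negb)) in pl; last first.
    by move=> x _ /=; rewrite negbK.
  rewrite rev_cons in pl.
  have pc' : pathrel E (cb ++ br) (c ++ qR).
    move: pc; rewrite /c lastI => pc; have := pathrel_cat pc r2.
    by rewrite cat_rcons.
  exact: (pathrel_cat pl pc').
- apply: uniq_cat_all; first by rewrite rev_uniq.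
    apply: uniq_cat_all => //.
    apply: sub_all r4 => x; rewrite !inE !negb_or => /andP[/andP[_ ->]].
    by [].
  rewrite all_cat; apply/andP; split.
    apply/allP=> x xc; rewrite mem_rev.
    apply/negP=> xq; move/allP: q4 => /(_ x xq); rewrite !inE.
    by move: xc; rewrite /c inE => ->; rewrite orbT.
  apply: sub_all r4 => x; rewrite !inE !negb_or mem_rev => /andP[_ ->].
  by [].
- rewrite !all_cat all_rev ac /=.
  apply/andP; split.
    apply: sub_all q4 => x; rewrite !inE negb_or; case/andP.
    by [].
  apply: sub_all r4 => x; rewrite !inE !negb_or; case/andP=> /andP[-> _].
  by [].
- by rewrite !map_cat map_rev q5 r5 size_rev size_map.
Qed.

End Ext.

Lemma pick3 (V : finType) (P X1 X2 X3 : {set V}) :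
  #|X1| + #|X2| + #|X3| < #|P| ->
  exists y, [/\ y \in P, y \notin X1, y \notin X2 & y \notin X3].
Proof.
move=> h.
have h' : #|X1 :|: X2 :|: X3| < #|P|.
  apply: leq_ltn_trans h.
  apply: leq_trans (card_setU_le _ _) _; rewrite leq_add2r; exact: card_setU_le.
case: (pick_out h') => y [hy]; rewrite !inE !negb_or => /andP[/andP[h1 h2] h3].
by exists y.
Qed.


Lemma chk_nonanti i c ab lw : i < 7 -> (lw = 2 \/ lw = 3) -> c = (if odd i then ~~ab else ab) ->
  chk ab (rev (altw (~~c) i) ++ [:: (if c then 0 else 1); lw; (if ~~c then 0 else 1)]
          ++ altw (~~ ~~ c) (8 - i.+2)).
Proof.
move=> hi hl ->; case: ab; case: hl => ->;
  (do 7! (case: i hi => [|i] hi; first by [])); by [].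
Qed.

Lemma neq_lab (V : finType) (A B S : {set V}) x y : lab A B S x != lab A B S y -> x != y.
Proof. by apply: contra => /eqP ->. Qed.

Ltac rwlab := repeat match goal with H : lab _ _ _ ?a = _ |- context [lab _ _ _ ?a] => rewrite H end.
Ltac neqt := solve [ assumption | rewrite eq_sym; assumption | apply/eqP => Heq; subst; match goal with H1 : ?l = ?c1, H2 : ?l = ?c2 |- _ => rewrite H1 in H2; discriminate end ].

Section Core.
Variable V : finType.
Variable E : rel V.
Variables A B S T ExA ExB ExS ExT : {set V}.
Variables k M : nat.
Hypothesis hP : is_partition4 A B S T.
Hypothesis tA : forall v, v \in A -> v \notin ExA ->
  #|[set y in B | ~~ E v y]| <= k /\ #|[set y in B | ~~ E y v]| <= k.
Hypothesis tB : forall v, v \in B -> v \notin ExB ->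
  #|[set y in A | ~~ E v y]| <= k /\ #|[set y in A | ~~ E y v]| <= k.
Hypothesis tS : forall v, v \in S -> v \notin ExS ->
  [/\ #|[set y in B | ~~ E v y]| <= k, #|[set y in S | ~~ E v y]| <= k,
      #|[set y in A | ~~ E y v]| <= k & #|[set y in S | ~~ E y v]| <= k].
Hypothesis tT : forall v, v \in T -> v \notin ExT ->
  [/\ #|[set y in A | ~~ E v y]| <= k, #|[set y in T | ~~ E v y]| <= k,
      #|[set y in B | ~~ E y v]| <= k & #|[set y in T | ~~ E y v]| <= k].
Hypothesis exA : #|ExA| <= k.
Hypothesis exB : #|ExB| <= k.
Hypothesis exS : #|ExS| <= k.
Hypothesis exT : #|ExT| <= k.
Hypothesis eA : forall y, y \in A -> M <= #|[set u in B | E u y]|.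
Hypothesis eT : forall y, y \in T -> M <= #|[set u in B :|: T | E u y]|.
Hypothesis szA : M <= #|A|.
Hypothesis szB : M <= #|B|.
Hypothesis szS : M <= #|S|.
Hypothesis szT : M <= #|T|.
Hypothesis hM : 4 * k + 60 <= M.

Notation lab := (lab A B S).

Lemma tAB c v : v \in sd A B c -> v \notin ex ExA ExB c ->
  #|[set y in sd A B (~~c) | ~~ E v y]| <= k /\ #|[set y in sd A B (~~c) | ~~ E y v]| <= k.
Proof. by case: c => /= h1 h2; [exact: tA | exact: tB]. Qed.

Lemma exAB c : #|ex ExA ExB c| <= k.
Proof. by case: c. Qed.

Lemma szAB c : M <= #|sd A B c|.
Proof. by case: c. Qed.

Definition PLconcl (L : 8.-tuple bool) (ab : bool) (W : {set V}) :=
  exists s : seq V, [/\ uniq s, pathrel E L s, all (fun x => x \notin W) s &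
                       chk ab (map lab s)].

Lemma finish (L : 8.-tuple bool) ab (W : {set V}) (bl br cb : seq bool) (cf : V) (c1 : seq V) cL cR :
  cf \in sd A B cL -> cf \notin ex ExA ExB cL ->
  last cf c1 \in sd A B cR -> last cf c1 \notin ex ExA ExB cR ->
  pathrel E cb (cf :: c1) -> uniq (cf :: c1) -> all (fun x => x \notin W) (cf :: c1) ->
  #|W| <= 9 -> tval L = bl ++ cb ++ br ->
  chk ab (rev (altw (~~ cL) (size bl)) ++ map lab (cf :: c1) ++ altw (~~ cR) (size br)) ->
  PLconcl L ab W.
Proof.
move=> h1 h2 h3 h4 pc uc ac hW hL hc.
have hs : size bl + size (cf :: c1) + size br = 9.
  have := size_tuple L; rewrite hL !size_cat (pathrel_size pc) /=; lia.
have := assemble hP tAB exAB szAB h1 h2 h3 h4 pc uc ac (W := W) (bl := bl) (br := br).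
case. lia.
move=> s [s1 s2 s3 s4]; exists s; split => //.
  by rewrite hL.
by rewrite s4.
Qed.


Lemma pk (P Ex N W : {set V}) : M <= #|P| -> #|Ex| <= k -> #|N| <= k -> #|W| <= 20 ->
  exists y, [/\ y \in P, y \notin N, y \notin Ex & y \notin W].
Proof.
move=> h1 h2 h3 h4; case: (@pick3 _ P N Ex W); first lia.
by move=> y [? ? ? ?]; exists y.
Qed.

Lemma nnb (P : {set V}) (f : V -> bool) y : y \in P -> y \notin [set z in P | ~~ f z] -> f y.
Proof. by move=> hy; rewrite inE hy /= negbK. Qed.


Lemma lA v : v \in A -> lab v = 0. Proof. by rewrite (labA _ B S) => /eqP. Qed.
Lemma lB v : v \in B -> lab v = 1. Proof. by rewrite (labB hP) => /eqP. Qed.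
Lemma lS v : v \in S -> lab v = 2. Proof. by rewrite (labS hP) => /eqP. Qed.
Lemma lT v : v \in T -> lab v = 3. Proof. by rewrite (labT hP) => /eqP. Qed.

Lemma cardW2 (W : {set V}) (s : seq V) : #|W :|: [set x in s]| <= #|W| + size s.
Proof. by apply: leq_trans (card_setU_le _ _) _; rewrite leq_add2l card_seqset. Qed.

Lemma notinWs (W : {set V}) (s : seq V) y : y \notin W :|: [set x in s] -> y \notin W /\ y \notin s.
Proof. by rewrite !inE negb_or => /andP[-> ->]. Qed.

Lemma core_ST (c bt : bool) (W : {set V}) : #|W| <= 9 ->
  exists p w q, [/\ p \in sd A B c, p \notin ex ExA ExB c, q \in sd A B (~~c),
     q \notin ex ExA ExB (~~c) &
     [/\ (lab w = 2 \/ lab w = 3), pathrel E [:: bt; bt] [:: p; w; q],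
         uniq [:: p; w; q] & all (fun x => x \notin W) [:: p; w; q]]].
Proof.
move=> hW.
have hW0 : #|W| <= 20 by lia.
have k0 : #|(set0 : {set V})| <= k by rewrite cards0.
case: (boolP (c == bt)) => hc.
-
  case: (pk szS exS k0 hW0) => w [wS _ wx wW].
  case: (tS wS wx) => hw1 hw2 hw3 hw4.
  have hW1 : #|W :|: [set x in [:: w]]| <= 20 by have := cardW2 W [:: w]; rewrite /=; lia.
  case: (pk szA exA hw3 hW1) => a [aA an ax aW].
  case: (pk szB exB hw1 hW1) => b [bB bn bx bW].
  have ea := nnb aA an; have eb := nnb bB bn.
  case/notinWs: aW => aW _; case/notinWs: bW => bW _.
  have la := lA aA; have lb := lB bB; have lw := lS wS.
  have na : a != w by apply: (@neq_lab _ A B S); rewrite la lw.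
  have nb : b != w by apply: (@neq_lab _ A B S); rewrite lb lw.
  have nab : a != b by apply: (@neq_lab _ A B S); rewrite la lb.
  move/eqP: hc => <-; case: c.
    exists a, w, b; split => //=; split; first by left.
    - by rewrite ea eb.
    - by rewrite !inE negb_or na nab eq_sym nb.
    - by rewrite aW wW bW.
  exists b, w, a; split => //=; split; first by left.
  - by rewrite ea eb.
  - by rewrite !inE negb_or nb eq_sym nab eq_sym na.
  - by rewrite aW wW bW.
-
  case: (pk szT exT k0 hW0) => w [wT _ wx wW].
  case: (tT wT wx) => hw1 hw2 hw3 hw4.
  have hW1 : #|W :|: [set x in [:: w]]| <= 20 by have := cardW2 W [:: w]; rewrite /=; lia.
  case: (pk szA exA hw1 hW1) => a [aA an ax aW].
  case: (pk szB exB hw3 hW1) => b [bB bn bx bW].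
  have ea := nnb aA an; have eb := nnb bB bn.
  case/notinWs: aW => aW _; case/notinWs: bW => bW _.
  have la := lA aA; have lb := lB bB; have lw := lT wT.
  have na : a != w by apply: (@neq_lab _ A B S); rewrite la lw.
  have nb : b != w by apply: (@neq_lab _ A B S); rewrite lb lw.
  have nab : a != b by apply: (@neq_lab _ A B S); rewrite la lb.
  have hb : bt = ~~ c by move: hc; case: c; case: bt.
  rewrite hb; case: c {hc hb}.
    exists a, w, b; split => //=; split; first by right.
    - by rewrite ea eb.
    - by rewrite !inE negb_or na nab eq_sym nb.
    - by rewrite aW wW bW.
  exists b, w, a; split => //=; split; first by right.
  - by rewrite ea eb.
  - by rewrite !inE negb_or nb eq_sym nab eq_sym na.
  - by rewrite aW wW bW.
Qed.


Lemma lab_sdc c v : v \in sd A B c -> lab v = if c then 0 else 1.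
Proof. by case: c => /=; [exact: lA | exact: lB]. Qed.

Lemma PL_nonanti (L : 8.-tuple bool) ab (W : {set V}) : #|W| <= 9 ->
  (exists2 i, i < 7 & nth false L i = nth false L i.+1) -> PLconcl L ab W.
Proof.
move=> hW [i hi hb].
set bt := nth false L i.
set c := if odd i then ~~ab else ab.
case: (core_ST c bt hW) => p [w [q [h1 h2 h3 h4 [h5 h6 h7 h8]]]].
have sL := size_tuple L.
apply: (finish (bl := take i L) (br := drop i.+2 L) (cb := [:: bt; bt]) (cf := p)
   (c1 := [:: w; q]) (cL := c) (cR := ~~c));
  [exact h1 | exact h2 | exact h3 | exact h4 | exact h6 | exact h7 | exact h8 | exact hW | | ].
- rewrite -{1}(cat_take_drop i L); congr (_ ++ _).
  rewrite (drop_nth false); last by rewrite sL (ltn_trans hi).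
  rewrite (drop_nth false); last by rewrite sL.
  by rewrite -hb.
- rewrite size_take size_drop sL.
  rewrite (ltn_trans hi) //.
  rewrite /= (lab_sdc h1) (lab_sdc h3).
  case: h5 => ->; apply: chk_nonanti => //; by [left | right].
Qed.

Lemma pk2 (P Ex W : {set V}) : M <= 2 * #|P| -> #|Ex| <= k -> #|W| <= 20 ->
  exists y, [/\ y \in P, y \notin Ex & y \notin W].
Proof.
move=> h1 h2 h3; case: (@pick3 _ P set0 Ex W).
  by rewrite cards0; move: hM h1 h2 h3; clear; lia.
by move=> y [? ? ? ?]; exists y.
Qed.

Lemma uniq4 (a b c d : V) : a != b -> a != c -> a != d -> b != c -> b != d -> c != d ->
  uniq [:: a; b; c; d].
Proof.
move=> h1 h2 h3 h4 h5 h6.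
by rewrite /= !inE !negb_or h1 h2 h3 h4 h5 h6.
Qed.

Lemma uniq5 (a b c d e : V) : a != b -> a != c -> a != d -> a != e -> b != c -> b != d ->
  b != e -> c != d -> c != e -> d != e -> uniq [:: a; b; c; d; e].
Proof.
move=> h1 h2 h3 h4 h5 h6 h7 h8 h9 h10.
by rewrite /= !inE !negb_or h1 h2 h3 h4 h5 h6 h7 h8 h9 h10.
Qed.


Definition altL (v : bool) : seq bool := [:: v; ~~v; v; ~~v; v; ~~v; v; ~~v].

Lemma G1 (L : 8.-tuple bool) ab (W : {set V}) x y :
  x \in S -> x \notin ExS -> y \in A -> E x y -> x \notin W -> y \notin W -> #|W| <= 9 ->
  (tval L = altL true \/ tval L = altL false) -> PLconcl L ab W.
Proof.
move=> xS xx yA exy xW yW hW hL.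
have hW0 : #|W| <= 20 by move: hW; clear; lia.
case: (tS xS xx) => hx1 hx2 hx3 hx4.
case: (pk szB exB hx1 hW0) => w1 [w1B w1n w1x w1W].
have hW1 : #|W :|: [set z in [:: w1]]| <= 20.
  by have := cardW2 W [:: w1]; move: hW; clear; rewrite /=; lia.
have hy := eA yA.
have hy2 : M <= 2 * #|[set u in B | E u y]| by move: hy; clear; lia.
case: (pk2 hy2 exB hW1) => w2 [w2B w2x w2W].
case/notinWs: w2W => w2W w2n.
move: w2B; rewrite inE => /andP[w2B ew2].
have ew1 := nnb w1B w1n.
have l1 := lB w1B; have l2 := lB w2B; have lx := lS xS; have ly := lA yA.
have n12 : w1 != w2 by move: w2n; rewrite inE eq_sym.
have u1 : uniq [:: w1; x; y; w2] by apply: uniq4; neqt.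
have u2 : uniq [:: w2; y; x; w1] by apply: uniq4; neqt.
have p1 : pathrel E [:: false; true; false] [:: w1; x; y; w2] by rewrite /= ew1 exy ew2.
have p2 : pathrel E [:: true; false; true] [:: w2; y; x; w1] by rewrite /= ew1 exy ew2.
have a1 : all (fun z => z \notin W) [:: w1; x; y; w2] by rewrite /= w1W xW yW w2W.
have a2 : all (fun z => z \notin W) [:: w2; y; x; w1] by rewrite /= w1W xW yW w2W.
case: hL => hL; case: ab.
- apply: (finish (bl := [:: true; false; true]) (br := [:: true; false]) (cL := false) (cR := false) _ _ _ _ p1 u1 a1 hW) => //; by rewrite /= l1 lx ly l2.
- apply: (finish (bl := [:: true; false]) (br := [:: false; true; false]) (cL := false) (cR := false) _ _ _ _ p2 u2 a2 hW) => //; by rewrite /= l1 lx ly l2.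
- apply: (finish (bl := [:: false; true; false]) (br := [:: false; true]) (cL := false) (cR := false) _ _ _ _ p2 u2 a2 hW) => //; by rewrite /= l1 lx ly l2.
- apply: (finish (bl := [:: false; true]) (br := [:: true; false; true]) (cL := false) (cR := false) _ _ _ _ p1 u1 a1 hW) => //; by rewrite /= l1 lx ly l2.
Qed.

Lemma G2 (L : 8.-tuple bool) ab (W : {set V}) x y :
  x \in S -> x \notin ExS -> y \in T -> M <= 2 * #|[set u in B | E u y]| ->
  E x y -> x \notin W -> y \notin W -> #|W| <= 9 ->
  (tval L = altL true \/ tval L = altL false) -> PLconcl L ab W.
Proof.
move=> xS xx yT hy2 exy xW yW hW hL.
have hW1 : #|W :|: [set z in [:: x]]| <= 20.
  by have := cardW2 W [:: x]; move: hW; clear; rewrite /=; lia.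
case: (tS xS xx) => hx1 hx2 hx3 hx4.
case: (pk szS exS hx2 hW1) => w [wS wn wx wW].
case/notinWs: wW => wW wxn.
have ew := nnb wS wn.
case: (tS wS wx) => hw1 hw2 hw3 hw4.
have hW0 : #|W| <= 20 by move: hW; clear; lia.
case: (pk szA exA hw3 hW0) => u [uA un ux uW].
have eu := nnb uA un.
case: (pk2 hy2 exB hW0) => z [zB zx zW].
move: zB; rewrite inE => /andP[zB ez].
have lu := lA uA; have lw := lS wS; have lx := lS xS; have ly := lT yT; have lz := lB zB.
have nwx : w != x by move: wxn; rewrite inE.
have u1 : uniq [:: u; w; x; y; z] by apply: uniq5; neqt.
have u2 : uniq [:: z; y; x; w; u] by apply: uniq5; neqt.
have p1 : pathrel E [:: true; false; true; false] [:: u; w; x; y; z] by rewrite /= eu ew exy ez.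
have p2 : pathrel E [:: true; false; true; false] [:: z; y; x; w; u] by rewrite /= eu ew exy ez.
have a1 : all (fun v => v \notin W) [:: u; w; x; y; z] by rewrite /= uW wW xW yW zW.
have a2 : all (fun v => v \notin W) [:: z; y; x; w; u] by rewrite /= uW wW xW yW zW.
case: hL => hL; case: ab.
- apply: (finish (bl := [:: true; false]) (br := [:: true; false]) (cL := true) (cR := false) _ _ _ _ p1 u1 a1 hW) => //; by rewrite /= ?lu ?lw ?lx ?ly ?lz.
- apply: (finish (bl := [:: true; false]) (br := [:: true; false]) (cL := false) (cR := true) _ _ _ _ p2 u2 a2 hW) => //; by rewrite /= ?lu ?lw ?lx ?ly ?lz.
- apply: (finish (bl := [:: false; true; false]) (br := [:: true]) (cL := false) (cR := true) _ _ _ _ p2 u2 a2 hW) => //; by rewrite /= ?lu ?lw ?lx ?ly ?lz.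
- apply: (finish (bl := [:: false]) (br := [:: true; false; true]) (cL := true) (cR := false) _ _ _ _ p1 u1 a1 hW) => //; by rewrite /= ?lu ?lw ?lx ?ly ?lz.
Qed.

Lemma G3 (L : 8.-tuple bool) ab (W : {set V}) x y :
  x \in S -> x \notin ExS -> y \in T -> M <= 2 * #|[set u in T | E u y]| ->
  E x y -> x \notin W -> y \notin W -> #|W| <= 9 ->
  (tval L = altL true \/ tval L = altL false) -> PLconcl L ab W.
Proof.
move=> xS xx yT hy2 exy xW yW hW hL.
have hW0 : #|W| <= 20 by move: hW; clear; lia.
have hW1 : #|W :|: [set z in [:: y]]| <= 20.
  by have := cardW2 W [:: y]; move: hW; clear; rewrite /=; lia.
case: (tS xS xx) => hx1 hx2 hx3 hx4.
case: (pk szB exB hx1 hW0) => z [zB zn zx zW].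
have ez := nnb zB zn.
case: (pk2 hy2 exT hW1) => w [wT wx wW].
case/notinWs: wW => wW wyn.
move: wT; rewrite inE => /andP[wT ew].
case: (tT wT wx) => hw1 hw2 hw3 hw4.
case: (pk szA exA hw1 hW0) => u [uA un ux uW].
have eu := nnb uA un.
have lu := lA uA; have lw := lT wT; have lx := lS xS; have ly := lT yT; have lz := lB zB.
have nwy : w != y by move: wyn; rewrite inE.
have u1 : uniq [:: z; x; y; w; u] by apply: uniq5; neqt.
have u2 : uniq [:: u; w; y; x; z] by apply: uniq5; neqt.
have p1 : pathrel E [:: false; true; false; true] [:: z; x; y; w; u] by rewrite /= eu ew exy ez.
have p2 : pathrel E [:: false; true; false; true] [:: u; w; y; x; z] by rewrite /= eu ew exy ez.
have a1 : all (fun v => v \notin W) [:: z; x; y; w; u] by rewrite /= uW wW xW yW zW.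
have a2 : all (fun v => v \notin W) [:: u; w; y; x; z] by rewrite /= uW wW xW yW zW.
case: hL => hL; case: ab.
- apply: (finish (bl := [:: true; false; true]) (br := [:: false]) (cL := false) (cR := true) _ _ _ _ p1 u1 a1 hW) => //; by rewrite /= ?lu ?lw ?lx ?ly ?lz.
- apply: (finish (bl := [:: true; false; true]) (br := [:: false]) (cL := true) (cR := false) _ _ _ _ p2 u2 a2 hW) => //; by rewrite /= ?lu ?lw ?lx ?ly ?lz.
- apply: (finish (bl := [:: false; true; false; true]) (br := [::]) (cL := true) (cR := false) _ _ _ _ p2 u2 a2 hW) => //; by rewrite /= ?lu ?lw ?lx ?ly ?lz.
- apply: (finish (bl := [:: false; true; false; true]) (br := [::]) (cL := false) (cR := true) _ _ _ _ p1 u1 a1 hW) => //; by rewrite /= ?lu ?lw ?lx ?ly ?lz.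
Qed.

Lemma anti_or_not (L : 8.-tuple bool) :
  (exists2 i, i < 7 & nth false L i = nth false L i.+1) \/
  (tval L = altL true \/ tval L = altL false).
Proof.
case: (boolP (has (fun i => nth false L i == nth false L i.+1) (iota 0 7))).
  case/hasP => i; rewrite mem_iota => /andP[_ hi] /eqP e; left; exists i => //.
move=> hn; right; move: hn.
case: L => bs hbs /=.
case: bs hbs => [|l0 [|l1 [|l2 [|l3 [|l4 [|l5 [|l6 [|l7 [|]]]]]]]]] //= _.
by case: l0; case: l1; case: l2; case: l3; case: l4; case: l5; case: l6; case: l7;
  rewrite /=; (try by []); (try by left); (try by right).
Qed.

Lemma PL (L : 8.-tuple bool) ab (W : {set V}) x y :
  x \in S -> x \notin ExS -> y \in A :|: T -> E x y -> x \notin W -> y \notin W -> #|W| <= 9 ->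
  PLconcl L ab W.
Proof.
move=> xS xx yAT exy xW yW hW.
case: (anti_or_not L) => [hi | hL]; first exact: PL_nonanti.
case/setUP: yAT => [yA | yT]; first exact: (@G1 L ab W x y xS xx yA exy xW yW hW hL).
have := eT yT.
have := card_setU_le [set u in B | E u y] [set u in T | E u y].
have -> : [set u in B | E u y] :|: [set u in T | E u y] = [set u in B :|: T | E u y].
  by apply/setP => u; rewrite !inE andb_orl.
move=> h1 h2.
have [h|h] : M <= 2 * #|[set u in B | E u y]| \/ M <= 2 * #|[set u in T | E u y]|.
  by move: h1 h2; clear; lia.
- exact: (@G2 L ab W x y xS xx yT h exy xW yW hW hL).
- exact: (@G3 L ab W x y xS xx yT h exy xW yW hW hL).
Qed.
End Core.

Lemma cardsU_disj (V : finType) (X Y : {set V}) :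
  (forall v, v \in X -> v \notin Y) -> #|X :|: Y| = #|X| + #|Y|.
Proof.
move=> H; rewrite cardsU.
have -> : X :&: Y = set0.
  apply/setP => v; rewrite !inE; case: (boolP (v \in X)) => //= h.
  by rewrite (negbTE (H v h)).
by rewrite cards0 subn0.
Qed.

Section M1.
Variable V : finType.
Variable E : rel V.
Variables A B S T : {set V}.
Hypothesis hP : is_partition4 A B S T.
Hypothesis hLoop : loopless E.
Variable n : nat.
Hypothesis hD : forall x, n <= 2 * dplus E setT x.

Lemma card_part : #|A| + #|B| + #|S| + #|T| = #|[set: V]|.
Proof.
case: (part_facts hP) => h1 [h2 [h3 [h4 [h5 h6]]]].
case: hP => hc _; rewrite -hc.
rewrite cardsU_disj; last first.
  move=> v; rewrite !inE => /orP[/orP[hA|hB]|hS].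
  - exact: h3. - exact: h5. - exact: h6.
rewrite cardsU_disj; last first.
  move=> v; rewrite !inE => /orP[hA|hB].
  - exact: h2. - exact: h4.
by rewrite cardsU_disj.
Qed.

Lemma outPS : 2 * (#|B| + #|S|) < n + 2 ->
  forall x, x \in S -> exists y, y \in A :|: T /\ E x y.
Proof.
move=> h x xS.
case: (pickP (fun y => (y \in A :|: T) && E x y)) => [y /andP[h1 h2]|none].
  by exists y.
case: (part_facts hP) => h1 [h2 [h3 [h4 [h5 h6]]]].
have sub : [set y in setT | E x y] \subset (B :|: S) :\ x.
  apply/subsetP => y; rewrite !inE /= => exy.
  have yx : y != x by apply: contraTneq exy => ->; exact: hLoop.
  rewrite yx /=.
  have := none y; rewrite exy andbT !inE => /negbT; rewrite negb_or => /andP[nA nT].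
  have := part_cover hP y; rewrite (negbTE nA) (negbTE nT) /= orbF.
  by [].
have := subset_leq_card sub.
have hx : x \in B :|: S by rewrite inE xS orbT.
have := cardsD1 x (B :|: S); rewrite hx.
rewrite cardsU_disj; last by move=> v hv; exact: h4.
have := hD x; rewrite /dplus.
move: h; clear; lia.
Qed.

End M1.

Definition Gd (V : finType) (E : rel V) (A B S T ExS ExT : {set V}) (x y : V) :=
  (x \in S /\ x \notin ExS /\ y \in A :|: T /\ E x y) \/
  (x \in T /\ x \notin ExT /\ y \in B :|: S /\ E x y).

Lemma Gd_swap (V : finType) (E : rel V) (A B S T ExS ExT : {set V}) x y :
  Gd E B A T S ExT ExS x y -> Gd E A B S T ExS ExT x y.
Proof. by case=> h; [right | left]. Qed.

Lemma part_swap (V : finType) (A B S T : {set V}) : is_partition4 A B S T -> is_partition4 B A T S.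
Proof.
case=> hc /and5P[d1 d2 d3 d4 /andP[d5 d6]]; split.
  by rewrite -hc; apply/setP => v; rewrite !inE; case: (v \in A); case: (v \in B);
    case: (v \in S); case: (v \in T).
by rewrite disjoint_sym d1 d5 d4 d3 d2 disjoint_sym d6.
Qed.

Section M2.
Variable V : finType.
Variable E : rel V.
Variables A B S T ExS ExT : {set V}.
Hypothesis hP : is_partition4 A B S T.
Hypothesis hLoop : loopless E.
Variable n : nat.
Hypothesis hD : forall x, n <= 2 * dplus E setT x.
Hypothesis hN : #|[set: V]| = n.
Variable k : nat.
Hypothesis exS : #|ExS| <= k.
Hypothesis exT : #|ExT| <= k.
Hypothesis szS : k + 3 <= #|S|.
Hypothesis szT : k + 3 <= #|T|.

Lemma gadgets_S : (forall x, x \in S -> exists y, y \in A :|: T /\ E x y) ->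
  exists x1 y1 x2 y2, [/\ Gd E A B S T ExS ExT x1 y1, Gd E A B S T ExS ExT x2 y2,
     x1 != x2, x1 != y2 & (y1 != x2) && (y1 != y2)].
Proof.
move=> hout.
case: (part_facts hP) => h1 [h2 [h3 [h4 [h5 h6]]]].
have nST : forall u v, u \in S -> v \in A :|: T -> u != v.
  move=> u v hu hv; apply/eqP => e; subst v; move: hu hv.
  rewrite !inE ?(labA A B S) ?(labB hP) ?(labS hP) ?(labT hP).
  by case: (lab A B S u) => [|[|[|[|]]]].
have nATBS : forall u v, u \in A :|: T -> v \in B :|: S -> u != v.
  move=> u v hu hv; apply/eqP => e; subst v; move: hu hv.
  rewrite !inE ?(labA A B S) ?(labB hP) ?(labS hP) ?(labT hP).
  by case: (lab A B S u) => [|[|[|[|]]]].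
case: (@pick3 _ S ExS set0 set0); first by rewrite cards0; move: exS szS; clear; lia.
move=> x1 [x1S x1x _ _].
case: (hout x1 x1S) => y1 [y1AT e1].
pose S1 := S :\: (ExS :|: [set x1]).
case: (pickP (fun x => (x \in S1) && [exists y, [&& y \in A :|: T, y != y1 & E x y]])) => [x|none].
  case/andP; rewrite !inE negb_or => /andP[/andP[xx xx1] xS] /existsP[y /and3P[yAT yy1 exy]].
  exists x1, y1, x, y; split.
  - by left.
  - by left.
  - by rewrite eq_sym.
  - exact: nST.
  - by apply/andP; split; [rewrite eq_sym; exact: nST | rewrite eq_sym].
(* every vertex of S1 has only y1 as out-neighbour in A :|: T *)
have hS1 : forall x, x \in S1 -> E x y1.
  move=> x xS1; have xS : x \in S by move: xS1; rewrite !inE => /andP[_ ->].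
  case: (hout x xS) => y [yAT exy].
  have := none x; rewrite xS1 /= => /negbT; rewrite negb_exists => /forallP /(_ y).
  by rewrite yAT exy andbT /= negbK => /eqP <-.
have cS1 : 1 < #|S1|.
  rewrite /S1 cardsD.
  have h7 := card_setU_le ExS [set x1]; rewrite cards1 in h7.
  have h8 := subset_leq_card (subsetIr S (ExS :|: [set x1])).
  move: exS szS h7 h8; clear; lia.
case: (@pick3 _ S1 set0 set0 set0); first by rewrite !cards0; move: cS1; clear; lia.
move=> x2 [x2S1 _ _ _].
have x2S : x2 \in S by move: x2S1; rewrite !inE => /andP[_ ->].
have sub : [set y in setT | E x2 y] \subset ((B :|: S) :\ x2) :|: [set y1].
  apply/subsetP => y; rewrite !inE /= => exy.
  case: (y =P y1) => [->|/eqP yy1]; first by rewrite orbT.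
  rewrite orbF.
  have yx : y != x2 by apply: contraTneq exy => ->; exact: hLoop.
  rewrite yx /=.
  case: (boolP (y \in A :|: T)) => yAT.
    have := none x2; rewrite x2S1 /= => /negbT; rewrite negb_exists => /forallP /(_ y).
    by rewrite yAT yy1 exy.
  move: yAT; rewrite inE negb_or => /andP[nA nT].
  by have := part_cover hP y; rewrite (negbTE nA) (negbTE nT) /= orbF.
have hdeg := hD x2.
have := subset_leq_card sub.
have := card_setU_le ((B :|: S) :\ x2) [set y1]; rewrite cards1.
have hx : x2 \in B :|: S by rewrite inE x2S orbT.
have := cardsD1 x2 (B :|: S); rewrite hx.
rewrite cardsU_disj; last by move=> v hv; exact: h4.
have hcp := card_part hP.
rewrite hN in hcp.
move=> c1 c2 c3; rewrite /dplus in hdeg.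
have hT : 2 * (#|A| + #|T|) < n + 2 by move: c1 c2 c3 hdeg hcp; clear; lia.
have houtT := outPS (part_swap hP) hLoop hD hT.
case: (@pick3 _ T ExT [set y1] set0); first by rewrite cards0 cards1; move: exT szT; clear; lia.
move=> x3 [x3T x3x x3y1 _].
case: (houtT x3 x3T) => y3 [y3BS e3].
case: (@pick3 _ S1 [set y3] set0 set0); first by rewrite !cards0 cards1; move: cS1; clear; lia.
move=> x4 [x4S1 x4y3 _ _].
have x4S : x4 \in S by move: x4S1; rewrite !inE => /andP[_ ->].
have x4x : x4 \notin ExS by move: x4S1; rewrite !inE !negb_or => /andP[/andP[-> _] _].
exists x4, y1, x3, y3; split.
- by left; split => //; split => //; split => //; exact: hS1.
- by right.
- by apply: nST => //; rewrite inE x3T orbT.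
- by move: x4y3; rewrite inE.
- rewrite andbC (nATBS _ _ y1AT y3BS) /=.
  by move: x3y1; rewrite inE eq_sym.
Qed.

End M2.

Definition sw (i : nat) : nat :=
  if i == 0 then 1 else if i == 1 then 0 else if i == 2 then 3 else 2.

Lemma chk_swap ab (w : seq nat) : size w = 9 -> chk ab (map sw w) = chk (~~ ab) w.
Proof.
move=> hs; rewrite /chk.
have n0 : nth 4 (map sw w) 0 = sw (nth 4 w 0) by rewrite (nth_map 4) ?hs.
have n8 : nth 4 (map sw w) 8 = sw (nth 4 w 8) by rewrite (nth_map 4) ?hs.
have e1 : forall b i, (sw i == (if b then 0 else 1)) = (i == (if ~~b then 0 else 1)).
  by move=> b i; case: b; case: i => [|[|[|[|i]]]].
have e2 : forall b i, (sw i == (if b then 1 else 0)) = (i == (if ~~b then 1 else 0)).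
  by move=> b i; case: b; case: i => [|[|[|[|i]]]].
rewrite n0 n8 e1 e2; congr [&& _, _, _ & _].
  rewrite filter_map sorted_map.
  have -> : [seq x <- w | preim sw (fun i => i < 2) x] = [seq x <- w | x < 2].
    by apply: eq_filter => i /=; case: i => [|[|[|[|i]]]].
  have er : relpre sw Rlab =2 Rlab.
    by move=> i j; rewrite /relpre /Rlab; case: i => [|[|[|[|i]]]]; case: j => [|[|[|[|j]]]].
  case: [seq x <- w | x < 2] => //= x l; exact: eq_path.
by rewrite count_map; congr odd; apply: eq_count => i /=; case: i => [|[|[|[|i]]]].
Qed.

Lemma lab_swap (V : finType) (A B S T : {set V}) : is_partition4 A B S T ->
  forall v, lab B A T v = sw (lab A B S v).
Proof.
move=> hP v; case: (part_facts hP) => h1 [h2 [h3 [h4 [h5 h6]]]].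
have hc := part_cover hP v.
rewrite /lab /sw; case hA: (v \in A).
  by rewrite (negbTE (h1 _ hA)).
case hB: (v \in B) => //.
case hS: (v \in S).
  by rewrite (negbTE (h6 _ hS)).
by rewrite hA hB hS /= in hc; rewrite hc.
Qed.

Section M3.
Variable V : finType.
Variable E : rel V.
Variables A B S T ExA ExB ExS ExT : {set V}.
Variables k M n : nat.
Hypothesis hP : is_partition4 A B S T.
Hypothesis hLoop : loopless E.
Hypothesis hD : forall x, n <= 2 * dplus E setT x.
Hypothesis hN : #|[set: V]| = n.
Hypothesis tA : forall v, v \in A -> v \notin ExA ->
  #|[set y in B | ~~ E v y]| <= k /\ #|[set y in B | ~~ E y v]| <= k.
Hypothesis tB : forall v, v \in B -> v \notin ExB ->
  #|[set y in A | ~~ E v y]| <= k /\ #|[set y in A | ~~ E y v]| <= k.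
Hypothesis tS : forall v, v \in S -> v \notin ExS ->
  [/\ #|[set y in B | ~~ E v y]| <= k, #|[set y in S | ~~ E v y]| <= k,
      #|[set y in A | ~~ E y v]| <= k & #|[set y in S | ~~ E y v]| <= k].
Hypothesis tT : forall v, v \in T -> v \notin ExT ->
  [/\ #|[set y in A | ~~ E v y]| <= k, #|[set y in T | ~~ E v y]| <= k,
      #|[set y in B | ~~ E y v]| <= k & #|[set y in T | ~~ E y v]| <= k].
Hypothesis exA : #|ExA| <= k.
Hypothesis exB : #|ExB| <= k.
Hypothesis exS : #|ExS| <= k.
Hypothesis exT : #|ExT| <= k.
Hypothesis eA : forall y, y \in A -> M <= #|[set u in B | E u y]|.
Hypothesis eB : forall y, y \in B -> M <= #|[set u in A | E u y]|.
Hypothesis eS : forall y, y \in S -> M <= #|[set u in A :|: S | E u y]|.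
Hypothesis eT : forall y, y \in T -> M <= #|[set u in B :|: T | E u y]|.
Hypothesis szA : M <= #|A|.
Hypothesis szB : M <= #|B|.
Hypothesis szS : M <= #|S|.
Hypothesis szT : M <= #|T|.
Hypothesis hM : 4 * k + 60 <= M.

Lemma PLg (L : 8.-tuple bool) ab (W : {set V}) x y :
  Gd E A B S T ExS ExT x y -> x \notin W -> y \notin W -> #|W| <= 9 ->
  PLconcl E A B S L ab W.
Proof.
case=> [[xS [xx [yAT exy]]] | [xT [xx [yBS exy]]]] xW yW hW.
  exact: (PL hP tA tB tS tT exA exB exS exT eA eT szA szB szS szT hM L ab xS xx yAT exy xW yW hW).
have := PL (part_swap hP) tB tA tT tS exB exA exT exS eB eS szB szA szT szS hM L (~~ab)
   xT xx yBS exy xW yW hW.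
case=> s [s1 s2 s3 s4]; exists s; split => //.
have sz : size s = 9 by rewrite (pathrel_size s2) size_tuple.
rewrite (eq_map (lab_swap hP)) map_comp chk_swap ?size_map // in s4.
by rewrite negbK in s4.
Qed.

Lemma comb (L1 L2 : 8.-tuple bool) ab1 ab2 :
  exists s1 s2, [/\ uniq s1 /\ pathrel E L1 s1 /\ chk ab1 (map (lab A B S) s1),
     uniq s2 /\ pathrel E L2 s2 /\ chk ab2 (map (lab A B S) s2) &
     all (fun z => z \notin s1) s2].
Proof.
have szS' : k + 3 <= #|S| by move: szS hM; clear; lia.
have szT' : k + 3 <= #|T| by move: szT hM; clear; lia.
have hcp := card_part hP; rewrite hN in hcp.
have [x1 [y1 [x2 [y2 [g1 g2 d1 d2 /andP[d3 d4]]]]]] :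
  exists x1 y1 x2 y2, [/\ Gd E A B S T ExS ExT x1 y1, Gd E A B S T ExS ExT x2 y2,
     x1 != x2, x1 != y2 & (y1 != x2) && (y1 != y2)].
  case: (ltnP (2 * (#|B| + #|S|)) (n + 2)) => h.
    exact: (gadgets_S hP hLoop hD hN exS exT szS' szT' (outPS hP hLoop hD h)).
  have h' : 2 * (#|A| + #|T|) < n + 2 by move: h hcp; clear; lia.
  have := gadgets_S (part_swap hP) hLoop hD hN exT exS szT' szS' (outPS (part_swap hP) hLoop hD h').
  case=> x1 [y1 [x2 [y2 [g1 g2 d1 d2 d3]]]].
  by exists x1, y1, x2, y2; split => //; apply: Gd_swap.
have hW1 : #|[set x2; y2]| <= 9 by rewrite cards2; case: (x2 != y2).
have x1W : x1 \notin [set x2; y2] by rewrite !inE negb_or d1 d2.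
have y1W : y1 \notin [set x2; y2] by rewrite !inE negb_or d3 d4.
case: (PLg L1 ab1 g1 x1W y1W hW1) => s1 [u1 p1 a1 c1].
have x2s : x2 \notin [set z in s1].
  rewrite inE; apply/negP => h; move/allP: a1 => /(_ x2 h); rewrite !inE eqxx.
  by [].
have y2s : y2 \notin [set z in s1].
  rewrite inE; apply/negP => h; move/allP: a1 => /(_ y2 h); rewrite !inE eqxx orbT.
  by [].
have hW2 : #|[set z in s1]| <= 9.
  by apply: leq_trans (card_seqset s1) _; rewrite (pathrel_size p1) size_tuple.
case: (PLg L2 ab2 g2 x2s y2s hW2) => s2 [u2 p2 a2 c2].
exists s1, s2; split => //.
by apply: sub_all a2 => z; rewrite inE.
Qed.

End M3.

Lemma nat_above (r : R) : (0 <= r)%R -> exists k : nat, (r <= INR k)%R /\ (INR k <= r + 1)%R.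
Proof.
move=> r0.
have [h1 h2] := archimed r.
have hup : (0 <= up r)%Z.
  apply: le_IZR; lra.
exists (Z.to_nat (up r)).
rewrite INR_IZR_INZ Znat.Z2Nat.id //.
lra.
Qed.

Lemma e13_lt (eps eps1 : R) : (0 < eps1)%R -> (0 < eps < eps1 * eps1 * eps1)%R ->
  (Rpower eps (1 / 3) < eps1)%R.
Proof.
move=> h1 [h2 h3].
have h4 : (0 < eps1 * eps1 * eps1)%R by apply: Rmult_lt_0_compat => //; apply: Rmult_lt_0_compat.
have := Rlt_Rpower_l eps (eps1 * eps1 * eps1) (1 / 3) ltac:(lra) (conj h2 h3).
have -> : (eps1 * eps1 * eps1 = Rpower eps1 (INR 3))%R.
  by rewrite Rpower_pow //= Rmult_1_r Rmult_assoc.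
rewrite Rpower_mult.
have -> : (INR 3 * (1 / 3) = 1)%R by rewrite /=; field.
by rewrite Rpower_1.
Qed.

Lemma R2n (a d k : nat) (x : R) : (Rn a - x <= Rn d)%R -> (x <= Rn k)%R -> a <= d + k.
Proof.
rewrite /Rn => h1 h2.
have h : (INR a <= INR (d + k))%R by rewrite plus_INR; lra.
by apply/leP; apply: INR_le.
Qed.

Lemma R2n' (m d : nat) (x : R) : (x <= Rn d)%R -> (Rn m <= x)%R -> m <= d.
Proof.
rewrite /Rn => h1 h2.
have h : (INR m <= INR d)%R by lra.
by apply/leP; apply: INR_le.
Qed.

Lemma nonnbr (V : finType) (X : {set V}) (P : pred V) k :
  #|X| <= #|[set y in X | P y]| + k -> #|[set y in X | ~~ P y]| <= k.
Proof.
have e : [set y in X | P y] :|: [set y in X | ~~ P y] = X.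
  by apply/setP => y; rewrite !inE; case: (y \in X); case: (P y).
have := cardsU_disj (X := [set y in X | P y]) (Y := [set y in X | ~~ P y]).
rewrite e => h; rewrite h; last by move=> v; rewrite !inE => /andP[_ ->]; rewrite andbF.
lia.
Qed.

Lemma sub_nonnbr (V : finType) (X Y : {set V}) (P : pred V) :
  #|[set y in X | ~~ P y]| <= #|[set y in X :|: Y | ~~ P y]|.
Proof.
apply: subset_leq_card; apply/subsetP => y; rewrite !inE => /andP[-> ->]; by [].
Qed.

Lemma sub_nonnbr' (V : finType) (X Y : {set V}) (P : pred V) :
  #|[set y in Y | ~~ P y]| <= #|[set y in X :|: Y | ~~ P y]|.
Proof.
apply: subset_leq_card; apply/subsetP => y; rewrite !inE => /andP[-> ->]; by rewrite orbT.
Qed.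

Theorem proposition7p3 :
  exists tau0 : R, (0 < tau0)%R /\ forall tau : R, (0 < tau < tau0)%R ->
  exists eta0 : R, (0 < eta0)%R /\ forall eta1 : R, (0 < eta1 < eta0)%R ->
  exists e10 : R, (0 < e10)%R /\ forall eps1 : R, (0 < eps1 < e10)%R ->
  exists e0 : R, (0 < e0)%R /\ forall eps : R, (0 < eps < e0)%R ->
  exists N : nat, forall n : nat, (N <= n)%N ->
  forall (V : finType) (E : rel V) (A B S T : {set V}),
    #|V| = n ->
    loopless E ->
    min_semideg_half E n ->
    ABST_conditions E A B S T n tau eta1 eps1 eps ->
  forall (L1 L2 : 8.-tuple bool) (ab1 ab2 : bool),
  exists (f1 f2 : 'I_9 -> V),
    [/\ is_copy E L1 f1, is_copy E L2 f2,
        (forall i j : 'I_9, f1 i != f2 j),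
        is_useful A B S T f1 /\ is_useful A B S T f2 &
        is_XY_path f1 (pickXY ab1 A B).1 (pickXY ab1 A B).2 /\
        is_XY_path f2 (pickXY ab2 A B).1 (pickXY ab2 A B).2].
Proof.
exists 1%R; split; first lra.
move=> tau [tau0 tau1].
exists tau; split => // eta1 [et0 et1].
exists (eta1 / 8)%R; split; first lra.
move=> eps1 [ep0 ep1].
exists (eps1 * eps1 * eps1)%R; split.
  by apply: Rmult_lt_0_compat => //; apply: Rmult_lt_0_compat.
move=> eps heps.
have h200 : (0 <= 200 / eta1)%R by apply: Rlt_le; apply: Rdiv_lt_0_compat; lra.
have [N [hN1 _]] := nat_above h200.
exists N => n hn V E A B S T hV hLoop hsd hABST L1 L2 ab1 ab2.
have hnR : (INR N <= INR n)%R by apply: le_INR; apply/leP.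
have hn0 : (0 <= INR n)%R := pos_INR n.
have hen : (200 <= eta1 * INR n)%R.
  have h1 : (eta1 * (200 / eta1) <= eta1 * INR n)%R.
    by apply: Rmult_le_compat_l; lra.
  have h2 : (eta1 * (200 / eta1) = 200)%R by field; lra.
  lra.
have he13 := e13_lt ep0 heps.
have hk0 : (0 <= eps1 * INR n)%R by apply: Rmult_le_pos; lra.
have [k [hk1 hk2]] := nat_above hk0.
pose M := 4 * k + 60.
have hMR : (Rn M <= eta1 * Rn n)%R.
  rewrite /Rn /M plus_INR mult_INR.
  have e4 : INR 4 = 4%R by simpl; ring.
  have e60 : INR 60 = 60%R by simpl; ring.
  rewrite e4 e60.
  have h1 : (eps1 * INR n <= eta1 / 8 * INR n)%R by apply: Rmult_le_compat_r; lra.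
  lra.
have e13n : (Rpower eps (1 / 3) * Rn n <= Rn k)%R.
  have h0 : (0 <= Rpower eps (1/3))%R by rewrite /Rpower; apply: Rlt_le; apply: exp_pos.
  have h1 : (Rpower eps (1 / 3) * INR n <= eps1 * INR n)%R.
    by apply: Rmult_le_compat_r; lra.
  rewrite /Rn; lra.
have etn : (eta1 * Rn n <= tau * Rn n)%R by apply: Rmult_le_compat_r; rewrite /Rn; lra.
move: hABST; rewrite /ABST_conditions.
move=> -[[hP _] [sA [sB [sS sT]]] _ [[bA bB] [cS cT]] [xA xB xS xT]].
case: xA => ExA [_ [ExAc ExAp]].
case: xB => ExB [_ [ExBc ExBp]].
case: xS => ExS [_ [ExSc ExSp]].
case: xT => ExT [_ [ExTc ExTp]].
case: (part_facts hP) => p1 [p2 [p3 [p4 [p5 p6]]]].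
have exA : #|ExA| <= k := R2n' hk1 ExAc.
have exB : #|ExB| <= k := R2n' hk1 ExBc.
have exS : #|ExS| <= k := R2n' hk1 ExSc.
have exT : #|ExT| <= k := R2n' hk1 ExTc.
have szA : M <= #|A| by apply: (R2n' (x := (eta1 * Rn n)%R)) => //; lra.
have szB : M <= #|B| by apply: (R2n' (x := (eta1 * Rn n)%R)) => //; lra.
have szS : M <= #|S| by apply: (R2n' (x := (eta1 * Rn n)%R)) => //; lra.
have szT : M <= #|T| by apply: (R2n' (x := (eta1 * Rn n)%R)) => //; lra.
have eA : forall y, y \in A -> M <= #|[set u in B | E u y]|.
  by move=> y hy; case: (bA y hy) => _ h; exact: (R2n' h hMR).
have eB : forall y, y \in B -> M <= #|[set u in A | E u y]|.
  by move=> y hy; case: (bB y hy) => _ h; exact: (R2n' h hMR).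
have eS : forall y, y \in S -> M <= #|[set u in A :|: S | E u y]|.
  by move=> y hy; case: (cS y hy) => _ h; exact: (R2n' h hMR).
have eT : forall y, y \in T -> M <= #|[set u in B :|: T | E u y]|.
  by move=> y hy; case: (cT y hy) => _ h; exact: (R2n' h hMR).
have tA : forall v, v \in A -> v \notin ExA ->
    #|[set y in B | ~~ E v y]| <= k /\ #|[set y in B | ~~ E y v]| <= k.
  move=> v hv hx; case: (ExAp v hv hx) => h1 h2; split; apply: nonnbr.
    exact: (R2n h1 e13n).
  exact: (R2n h2 e13n).
have tB : forall v, v \in B -> v \notin ExB ->
    #|[set y in A | ~~ E v y]| <= k /\ #|[set y in A | ~~ E y v]| <= k.
  move=> v hv hx; case: (ExBp v hv hx) => h1 h2; split; apply: nonnbr.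
    exact: (R2n h1 e13n).
  exact: (R2n h2 e13n).
have cBS : #|B :|: S| = #|B| + #|S| by apply: cardsU_disj => v hv; exact: p4.
have cAS : #|A :|: S| = #|A| + #|S| by apply: cardsU_disj => v hv; exact: p2.
have cAT : #|A :|: T| = #|A| + #|T| by apply: cardsU_disj => v hv; exact: p3.
have cBT : #|B :|: T| = #|B| + #|T| by apply: cardsU_disj => v hv; exact: p5.
have tS : forall v, v \in S -> v \notin ExS ->
  [/\ #|[set y in B | ~~ E v y]| <= k, #|[set y in S | ~~ E v y]| <= k,
      #|[set y in A | ~~ E y v]| <= k & #|[set y in S | ~~ E y v]| <= k].
  move=> v hv hx; case: (ExSp v hv hx); rewrite /Rn -!plus_INR => h1 h2.
  have g1 : #|[set y in B :|: S | ~~ E v y]| <= k.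
    by apply: nonnbr; rewrite cBS; exact: (R2n h1 e13n).
  have g2 : #|[set y in A :|: S | ~~ E y v]| <= k.
    by apply: nonnbr (fun y => E y v) _ _; rewrite cAS; exact: (R2n h2 e13n).
  split.
  - exact: leq_trans (sub_nonnbr _ _ _) g1.
  - exact: leq_trans (sub_nonnbr' _ _ _) g1.
  - exact: leq_trans (sub_nonnbr _ _ (fun y => E y v)) g2.
  - exact: leq_trans (sub_nonnbr' _ _ (fun y => E y v)) g2.
have tT : forall v, v \in T -> v \notin ExT ->
  [/\ #|[set y in A | ~~ E v y]| <= k, #|[set y in T | ~~ E v y]| <= k,
      #|[set y in B | ~~ E y v]| <= k & #|[set y in T | ~~ E y v]| <= k].
  move=> v hv hx; case: (ExTp v hv hx); rewrite /Rn -!plus_INR => h1 h2.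
  have g1 : #|[set y in A :|: T | ~~ E v y]| <= k.
    by apply: nonnbr; rewrite cAT; exact: (R2n h1 e13n).
  have g2 : #|[set y in B :|: T | ~~ E y v]| <= k.
    by apply: nonnbr (fun y => E y v) _ _; rewrite cBT; exact: (R2n h2 e13n).
  split.
  - exact: leq_trans (sub_nonnbr _ _ _) g1.
  - exact: leq_trans (sub_nonnbr' _ _ _) g1.
  - exact: leq_trans (sub_nonnbr _ _ (fun y => E y v)) g2.
  - exact: leq_trans (sub_nonnbr' _ _ (fun y => E y v)) g2.
have hM : 4 * k + 60 <= M by [].
have hD : forall x, n <= 2 * dplus E setT x by move=> x; case: (hsd x).
have hN : #|[set: V]| = n by rewrite cardsT hV.
have [s1 [s2 [[u1 [q1 c1]] [u2 [q2 c2]] a12]]] :=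
  comb hP hLoop hD hN tA tB tS tT exA exB exS exT eA eB eS eT szA szB szS szT hM L1 L2 ab1 ab2.
have sz1 : size s1 = 9 by rewrite (pathrel_size q1) size_tuple.
have sz2 : size s2 = 9 by rewrite (pathrel_size q2) size_tuple.
have [x0 _] : exists x : V, x \in s1 by case: (s1) sz1 => [|x s'] // _; exists x; rewrite mem_head.
have [U1 X1] := useful_of_chk hP x0 sz1 c1.
have [U2 X2] := useful_of_chk hP x0 sz2 c2.
exists (fun i : 'I_9 => nth x0 s1 i), (fun i : 'I_9 => nth x0 s2 i); split.
- exact: copy_of_seq.
- exact: copy_of_seq.
- move=> i j; apply/eqP => e.
  have hi : nth x0 s1 i \in s1 by apply: mem_nth; rewrite sz1.
  have hj : nth x0 s2 j \in s2 by apply: mem_nth; rewrite sz2.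
  by move/allP: a12 => /(_ _ hj); rewrite -e hi.
- by split.
- by split; [move: X1; case: (ab1) | move: X2; case: (ab2)].
Qed.
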